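(* Let $G=(V,E)$ be a unit disk graph, let $VC^*(G)$ be a minimum vertex cover of $G$, and let $VC(G)$ be the vertex cover output by Heuristic VCover on $G$. Then $|VC(G)| \leq 1.5\,|VC^*(G)|$.
   Context: A graph $G$ is a unit disk graph if its vertices can be put in one-to-one correspondence with closed disks of radius $1$ in the plane so that two vertices are adjacent if and only if the corresponding disks intersect (tangent disks are considered to intersect). A vertex cover of $G$ is a set $V'\subseteq V$ containing at least one endpoint of every edge; for $U\subseteq V$, $G(U)$ denotes the subgraph induced on $U$. Heuristic VCover: (1) Set $V_1=\emptyset$, $V'=V$. (2) While $G(V')$ contains a triangle, pick a set $X\subseteq V'$ such that $G(X)$ is a triangle, and set $V_1 = V_1\cup X$, $V'=V'\setminus X$. (3) For the resulting triangle-free graph $G(V')$, compute (by the Nemhauser–Trotter algorithm, in polynomial time) two disjoint sets $P,Q\subseteq V'$ such that: (i) some minimum vertex cover of $G(V')$ contains $P$; (ii) if $D$ is any vertex cover of $G(Q)$ then $D\cup P$ is a vertex cover of $G(V')$; (iii) every minimum vertex cover of $G(V')$ has size at least $|P|+|Q|/2$. (4) Properly color $G(Q)$ with at most $4$ colors (possible since $G(Q)$ is a triangle-free unit disk graph), and let $S$ be a color class of largest cardinality. (5) Output $VC(G)=V_1\cup P\cup (Q\setminus S)$. *)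

(* Defs.v *)
From HB Require Import structures.
From mathcomp Require Import all_boot all_order all_algebra.
From mathcomp Require Import reals.
Set Implicit Arguments. Unset Strict Implicit. Unset Printing Implicit Defensive.
Import Order.TTheory GRing.Theory Num.Theory.

(* A simple graph on a finite vertex type T is an irreflexive relation e;
   for unit disk graphs symmetry follows from the geometric representation. *)

Section Defs.
Variable T : finType.
Variable e : rel T.

(* G is a unit disk graph: an injective placement of centres of radius-1
   closed disks in R^2, with u ~ v iff the disks intersect, i.e. iff the
   centres are at distance <= 2 (squared distance <= 4). *)
Definition is_unit_disk_graph (R : realType) : Prop :=
  (forall v, ~~ e v v) /\
  exists p : T -> R * R, injective p /\
    forall u v, u != v ->
      e u v = (((p u).1 - (p v).1) ^+ 2 + ((p u).2 - (p v).2) ^+ 2 <= 4%:R)%R.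

Definition is_vc (U D : {set T}) : Prop :=
  D \subset U /\
  forall x y, x \in U -> y \in U -> e x y -> (x \in D) || (y \in D).

Definition is_min_vc (U D : {set T}) : Prop :=
  is_vc U D /\ forall D', is_vc U D' -> #|D| <= #|D'|.

Definition is_triangle (X : {set T}) : Prop :=
  #|X| = 3 /\ forall x y, x \in X -> y \in X -> x != y -> e x y.

Definition triangle_free (U : {set T}) : Prop :=
  forall X : {set T}, X \subset U -> ~ is_triangle X.

Fixpoint triangle_steps (V' : {set T}) (Xs : seq {set T}) : Prop :=
  match Xs with
  | [::] => True
  | X :: Xs' => X \subset V' /\ is_triangle X /\ triangle_steps (V' :\: X) Xs'
  end.

(* VC is a possible output of Heuristic VCover on G (over all admissible
   choices made by the heuristic). *)
Definition vcover_output (VC : {set T}) : Prop :=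
  exists (Xs : seq {set T}) (P Q : {set T}) (c : T -> 'I_4) (k : 'I_4),
    let V1 := \bigcup_(X <- Xs) X in
    let V' := [set: T] :\: V1 in
    let S := [set x in Q | c x == k] in
    triangle_steps [set: T] Xs /\
        triangle_free V' /\
        P \subset V' /\ Q \subset V' /\ [disjoint P & Q] /\
        (exists D, is_min_vc V' D /\ P \subset D) /\
        (forall D, is_vc Q D -> is_vc V' (D :|: P)) /\
        (forall D, is_min_vc V' D -> 2 * #|P| + #|Q| <= 2 * #|D|) /\
        (forall x y, x \in Q -> y \in Q -> e x y -> c x != c y) /\
        (forall j : 'I_4, #|[set x in Q | c x == j]| <= #|S|) /\
        VC = V1 :|: P :|: (Q :\: S).

End Defs.

(* Main.v *)
Require Import Defs.
From HB Require Import structures.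
From mathcomp Require Import all_boot all_order all_algebra.
From mathcomp Require Import reals.
From mathcomp Require Import zify.

Lemma tri_steps_lem (T : finType) (e : rel T) (Xs : seq {set T}) :
  forall (U C : {set T}), triangle_steps e U Xs ->
  (forall x y, x \in U -> y \in U -> e x y -> (x \in C) || (y \in C)) ->
  [/\ (\bigcup_(X <- Xs) X) \subset U,
      #|\bigcup_(X <- Xs) X| = 3 * size Xs &
      2 * size Xs <= #|C :&: \bigcup_(X <- Xs) X|].
Proof.
elim: Xs => [|X Xs IH] U C /=.
  by move=> _ _; rewrite big_nil cards0 setI0 cards0 sub0set.
move=> [sXU [[c3 tri] st]] cov.
have cov' : forall x y, x \in U :\: X -> y \in U :\: X -> e x y ->
    (x \in C) || (y \in C).
  by move=> x y /setDP[xU _] /setDP[yU _]; apply: cov.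
have [sB cB lB] := IH _ _ st cov'.
rewrite big_cons.
have dis : [disjoint X & \bigcup_(X0 <- Xs) X0].
  rewrite -setI_eq0; apply/eqP/setP => z; rewrite in_set0 inE.
  apply/andP => [[zX zB]]; have := subsetP sB z zB; by rewrite inE zX.
have XC : #|X :\: C| <= 1.
  rewrite leqNgt; apply/negP => /card_gt1P [x [y [xX yX xy]]].
  move: xX yX; rewrite !inE => /andP[xC xX] /andP[yC yX].
  have := cov x y (subsetP sXU x xX) (subsetP sXU y yX) (tri x y xX yX xy).
  by rewrite (negbTE xC) (negbTE yC).
have XC2 : 2 <= #|C :&: X|.
  have := cardsID C X; rewrite setIC; lia.
split.
- rewrite subUset sXU /=; apply: (subset_trans sB); exact: subsetDl.
- rewrite cardsU.
  have -> : X :&: \bigcup_(X0 <- Xs) X0 = set0.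
    by apply/eqP; rewrite setI_eq0.
  rewrite cards0 c3 cB; lia.
- rewrite setIUr cardsU.
  have -> : (C :&: X) :&: (C :&: \bigcup_(X0 <- Xs) X0) = set0.
    apply/eqP; rewrite setI_eq0; apply: disjointWl (subsetIr C X) _.
    by apply: disjointWr (subsetIr _ _) dis.
  rewrite cards0; lia.
Qed.

Theorem theorem4p3 (R : realType) (T : finType) (e : rel T)
  (VC VCstar : {set T}) :
  is_unit_disk_graph e R ->
  vcover_output e VC ->
  is_min_vc e [set: T] VCstar ->
  2 * #|VC| <= 3 * #|VCstar|.
Proof.
move=> _ [Xs [P [Q [c [k /=]]]]].
set V1 := \bigcup_(X <- Xs) X.
set S := [set x in Q | c x == k].
move=> [st [_ [sP [sQ [_ [[D [minD _]] [_ [iii [_ [maxS ->]]]]]]]]]].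
move=> [[_ covC] _].
have [_ cV1 lV1] := @tri_steps_lem T e Xs _ VCstar st (fun x y xU yU exy => covC x y xU yU exy).
have vcV : is_vc e ([set: T] :\: V1) (VCstar :&: ([set: T] :\: V1)).
  split; first exact: subsetIr.
  move=> x y xV yV exy; rewrite !inE.
  move: xV yV; rewrite !inE => /= xV yV; rewrite xV yV /= !andbT.
  exact: covC.
have hD := iii D minD.
have hD2 := minD.2 _ vcV.
have hC := cardsID V1 VCstar.
move: hC; rewrite (_ : VCstar :\: V1 = VCstar :&: ([set: T] :\: V1)); last first.
  by apply/setP => z; rewrite !inE andbT andbC.
move=> hC.
pose o0 := @Ordinal 4 0 isT. pose o1 := @Ordinal 4 1 isT.
pose o2 := @Ordinal 4 2 isT. pose o3 := @Ordinal 4 3 isT.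
have hQ : #|Q| <= 4 * #|S|.
  have sub : Q \subset [set x in Q | c x == o0] :|: [set x in Q | c x == o1]
      :|: [set x in Q | c x == o2] :|: [set x in Q | c x == o3].
    apply/subsetP => x xQ; rewrite !inE xQ /=.
    by case: (c x) => -[|[|[|[|n]]]] Hm.
  have := subset_leq_card sub; rewrite !cardsU.
  have := maxS o0; have := maxS o1; have := maxS o2; have := maxS o3.
  lia.
have hQS : #|Q :\: S| + #|S| = #|Q|.
  have := cardsID S Q; rewrite (_ : Q :&: S = S); first lia.
  by apply/setIidPr/subsetP => x; rewrite inE => /andP[].
have hVC : #|V1 :|: P :|: (Q :\: S)| <= #|V1| + #|P| + #|Q :\: S|.
  rewrite !cardsU; lia.
move: cV1 lV1; rewrite -/V1 => cV1 lV1.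
clear -hC cV1 lV1 hD hD2 hQ hQS hVC.
lia.
Qed.
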